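(* Let $f:\mathbb{N}\to\mathbb{R}$ be non-decreasing with $f(n)>28$ for all $n$, and $p=f(n)\log n/n$. Let $Y=\sum_{i=1}^{n/7}X_i$, where the $X_i$ are independent and $X_i\sim\mathrm{Geom}(1-(1-p)^i)$. Then for every $\varepsilon>0$, $$\mathbb{P}\Big((1-\varepsilon)\Big(\frac n7+\frac n{f(n)}\Big)<Y<(1+\varepsilon)\Big(\frac n7+\frac n{f(n)}\Big)\Big)\longrightarrow 1\quad\text{as }n\to\infty.$$
   Context: $\mathrm{Geom}(q)$ denotes the geometric distribution on $\{1,2,3,\dots\}$ with success probability $q$, i.e. $\mathbb{P}(X=k)=(1-q)^{k-1}q$ (number of trials up to and including the first success). The upper summation limit $n/7$ is understood as an integer (e.g. $\lfloor n/7\rfloor$). *)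

(* Defs.v *)
From Stdlib Require Import Reals Lra Lia ZArith Arith List.
Open Scope R_scope.

Definition geom_pmf (q : R) (k : nat) : R :=
  match k with
  | O => 0
  | S j => (1 - q) ^ j * q
  end.

Fixpoint sum_1_to (k : nat) (g : nat -> R) : R :=
  match k with
  | O => 0
  | S j => sum_1_to j g + g (S j)
  end.

(* pmf of the sum of independent geometric variables with success
   probabilities qs (law of the independent sum = convolution of the laws). *)
Fixpoint indep_geom_sum_pmf (qs : list R) (k : nat) : R :=
  match qs with
  | nil => if Nat.eqb k 0 then 1 else 0
  | q :: qs' => sum_1_to k (fun j => geom_pmf q j * indep_geom_sum_pmf qs' (k - j))
  end.

Fixpoint sum_0_to (M : nat) (g : nat -> R) : R :=
  match M with
  | O => g O
  | S m => sum_0_to m g + g (S m)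
  end.

(* P(a < Y < b) for Y = sum of independent Geom(q), q in qs.
   Y takes values in nat, and INR k < b forces k < up b, so the sum is exact. *)
Definition prob_strictly_between (qs : list R) (a b : R) : R :=
  sum_0_to (Z.to_nat (up b))
    (fun k => if Rlt_dec a (INR k) then
                if Rlt_dec (INR k) b then indep_geom_sum_pmf qs k else 0
              else 0).

Definition edge_p (f : nat -> R) (n : nat) : R :=
  Rmin 1 (f n * ln (INR n) / INR n).

Definition succ_probs (f : nat -> R) (n : nat) : list R :=
  map (fun i => 1 - (1 - edge_p f n) ^ i) (seq 1 (Nat.div n 7)).

Definition target (f : nat -> R) (n : nat) : R :=
  INR (Nat.div n 7) + INR n / f n.

(* Main.v *)
Require Import Defs.
From Stdlib Require Import Reals Lra Lia List ZArith.
Open Scope R_scope.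


Lemma s0_ext M g h : (forall k, (k <= M)%nat -> g k = h k) -> sum_0_to M g = sum_0_to M h.
Proof. induction M; intros H; simpl. apply H; lia. rewrite IHM by (intros; apply H; lia). rewrite H by lia. reflexivity. Qed.

Lemma s0_le M g h : (forall k, (k <= M)%nat -> g k <= h k) -> sum_0_to M g <= sum_0_to M h.
Proof. induction M; intros H; simpl. apply H; lia. apply Rplus_le_compat. apply IHM; intros; apply H; lia. apply H; lia. Qed.

Lemma s0_plus M g h : sum_0_to M (fun k => g k + h k) = sum_0_to M g + sum_0_to M h.
Proof. induction M; simpl; [reflexivity| rewrite IHM; ring]. Qed.

Lemma s0_scal M c g : sum_0_to M (fun k => c * g k) = c * sum_0_to M g.
Proof. induction M; simpl; [reflexivity| rewrite IHM; ring]. Qed.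

Lemma s0_shift M g : sum_0_to (S M) g = g O + sum_0_to M (fun k => g (S k)).
Proof. induction M; simpl in *. ring. rewrite IHM. simpl. ring. Qed.

Lemma s1_ext M g h : (forall k, (1 <= k <= M)%nat -> g k = h k) -> sum_1_to M g = sum_1_to M h.
Proof. induction M; intros H; simpl. reflexivity. rewrite IHM by (intros; apply H; lia). rewrite H by lia. reflexivity. Qed.

Lemma s1_le M g h : (forall k, (1 <= k <= M)%nat -> g k <= h k) -> sum_1_to M g <= sum_1_to M h.
Proof. induction M; intros H; simpl. lra. apply Rplus_le_compat. apply IHM; intros; apply H; lia. apply H; lia. Qed.

Lemma s1_scal M c g : sum_1_to M (fun k => c * g k) = c * sum_1_to M g.
Proof. induction M; simpl; [ring| rewrite IHM; ring]. Qed.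

Lemma s1_plus M g h : sum_1_to M (fun k => g k + h k) = sum_1_to M g + sum_1_to M h.
Proof. induction M; simpl; [ring| rewrite IHM; ring]. Qed.

Lemma s1_shift M g : sum_1_to (S M) g = g 1%nat + sum_1_to M (fun k => g (S k)).
Proof. induction M; simpl in *. ring. rewrite IHM. simpl. ring. Qed.

Lemma s1_nonneg M g : (forall k, (1 <= k <= M)%nat -> 0 <= g k) -> 0 <= sum_1_to M g.
Proof. induction M; intros H; simpl. lra. assert (0 <= g (S M)) by (apply H; lia).
 assert (0 <= sum_1_to M g) by (apply IHM; intros; apply H; lia). lra. Qed.

Lemma s1_mono K M g : (K <= M)%nat -> (forall k, (1 <= k <= M)%nat -> 0 <= g k) -> sum_1_to K g <= sum_1_to M g.
Proof. intros HK H. induction HK. lra. simpl. assert (0 <= g (S m)) by (apply H; lia).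
 assert (sum_1_to K g <= sum_1_to m g) by (apply IHHK; intros; apply H; lia). lra. Qed.

Notation P := indep_geom_sum_pmf.

Lemma pmf_cons_0 q qs : P (q :: qs) O = 0.
Proof. reflexivity. Qed.

Lemma pmf_cons_S q qs k : P (q :: qs) (S k) = q * P qs k + (1 - q) * P (q :: qs) k.
Proof.
  assert (U : forall k, P (q :: qs) k = sum_1_to k (fun j => geom_pmf q j * P qs (k - j))) by reflexivity.
  rewrite !U. rewrite s1_shift.
  replace (geom_pmf q 1 * P qs (S k - 1)) with (q * P qs k).
  2:{ simpl. replace (k - 0)%nat with k by lia. ring. }
  f_equal. rewrite <- s1_scal. apply s1_ext.
  intros j Hj. destruct j. lia. simpl geom_pmf. replace (S k - S (S j))%nat with (k - S j)%nat by lia. ring.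
Qed.

Lemma pmf_nil_sum K : sum_0_to K (P nil) = 1.
Proof. induction K; simpl in *. reflexivity. rewrite IHK. ring. Qed.

Definition okq (q : R) := 0 < q <= 1.

Lemma pmf_nonneg qs : Forall okq qs -> forall k, 0 <= P qs k.
Proof.
  induction 1 as [|q qs Hq Hqs IH]; intros k.
  - simpl. destruct (Nat.eqb k 0); lra.
  - induction k. rewrite pmf_cons_0; lra. rewrite pmf_cons_S. unfold okq in Hq.
    assert (0 <= q * P qs k) by (apply Rmult_le_pos; [lra| apply IH]).
    assert (0 <= (1-q) * P (q::qs) k) by (apply Rmult_le_pos; lra). lra.
Qed.

Lemma cdf_le1 qs : Forall okq qs -> forall K, sum_0_to K (P qs) <= 1.
Proof.
  induction 1 as [|q qs Hq Hqs IH]; intros K.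
  - rewrite pmf_nil_sum; lra.
  - unfold okq in Hq. induction K. { change (sum_0_to 0 (P (q::qs))) with 0. lra. }
    rewrite s0_shift. rewrite pmf_cons_0.
    rewrite (s0_ext K _ (fun k => q * P qs k + (1-q) * P (q::qs) k)) by (intros; apply pmf_cons_S).
    rewrite s0_plus, !s0_scal. specialize (IH K).
    assert (q * sum_0_to K (P qs) <= q * 1) by (apply Rmult_le_compat_l; lra).
    assert ((1-q) * sum_0_to K (P (q::qs)) <= (1-q) * 1) by (apply Rmult_le_compat_l; lra). lra.
Qed.

Definition Gf (q z : R) := q * z / (1 - (1 - q) * z).
Definition Pi (qs : list R) (z : R) := fold_right (fun q acc => Gf q z * acc) 1 qs.
Definition okz (z : R) (q : R) := 0 < q <= 1 /\ (1 - q) * z < 1.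

Lemma okz_okq z qs : Forall (okz z) qs -> Forall okq qs.
Proof. intros H. eapply Forall_impl; [|exact H]. intros a [Ha _]; exact Ha. Qed.

Lemma Pi_nonneg z qs : 0 <= z -> Forall (okz z) qs -> 0 <= Pi qs z.
Proof.
  intros Hz. induction 1 as [|q qs [Hq Hq2] Hqs IH]; simpl. lra.
  apply Rmult_le_pos; auto. unfold Gf. apply Rmult_le_pos. apply Rmult_le_pos; lra.
  left; apply Rinv_0_lt_compat; lra.
Qed.

Lemma Gf_ge1 q z : 1 <= z -> okz z q -> 1 <= Gf q z.
Proof. intros Hz [Hq Hq2]. unfold Gf. apply Rmult_le_reg_r with (1 - (1-q)*z). lra.
  unfold Rdiv. rewrite Rmult_assoc, Rinv_l by lra. nra. Qed.

Lemma Pi_ge1 z qs : 1 <= z -> Forall (okz z) qs -> 1 <= Pi qs z.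
Proof.
  intros Hz. induction 1 as [|q qs Hq Hqs IH]; simpl. lra.
  pose proof (Gf_ge1 q z Hz Hq). nra.
Qed.

Lemma mgf_le z qs : 0 <= z -> Forall (okz z) qs ->
  forall K, sum_0_to K (fun k => z ^ k * P qs k) <= Pi qs z.
Proof.
  intros Hz. induction 1 as [|q qs [Hq Hq2] Hqs IH]; intros K.
  - simpl Pi. rewrite (s0_ext K _ (P nil)). rewrite pmf_nil_sum; lra.
    intros k _. simpl. destruct k; simpl; ring.
  - simpl Pi. set (B := Gf q z * Pi qs z).
    assert (HB : B * (1 - (1-q)*z) = q * z * Pi qs z).
    { unfold B, Gf. field. lra. }
    assert (0 <= Pi qs z) by (apply Pi_nonneg; auto).
    assert (0 <= B). { unfold B, Gf. apply Rmult_le_pos; auto. apply Rmult_le_pos. apply Rmult_le_pos; lra.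
      left; apply Rinv_0_lt_compat; lra. }
    induction K. simpl sum_0_to. simpl pow. rewrite Rmult_1_l. change (P (q::qs) 0%nat) with 0. lra.
    rewrite s0_shift, pmf_cons_0.
    rewrite (s0_ext K _ (fun k => (q*z) * (z^k * P qs k) + ((1-q)*z) * (z^k * P (q::qs) k)))
      by (intros; rewrite pmf_cons_S; simpl; ring).
    rewrite s0_plus, !s0_scal. specialize (IH K).
    assert (q*z * sum_0_to K (fun k => z ^ k * P qs k) <= q*z * Pi qs z) by (apply Rmult_le_compat_l; nra).
    assert ((1-q)*z * sum_0_to K (fun k => z ^ k * P (q::qs) k) <= (1-q)*z*B) by (apply Rmult_le_compat_l; nra).
    nra.
Qed.

Lemma cdf_ge z qs : 1 <= z -> Forall (okz z) qs ->
  forall K, 1 - (/ z) ^ (S K) * Pi qs z <= sum_0_to K (P qs).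
Proof.
  intros Hz. assert (Hw: 0 < / z <= 1). { split. apply Rinv_0_lt_compat; lra.
     rewrite <- Rinv_1. apply Rinv_le_contravar; lra. }
  set (w := / z) in *. assert (Hzw : z * w = 1) by (unfold w; field; lra).
  induction 1 as [|q qs [Hq Hq2] Hqs IH]; intros K.
  - rewrite pmf_nil_sum. simpl. assert (0 <= w * w ^ K) by (apply Rmult_le_pos; [lra| apply pow_le; lra]). lra.
  - simpl Pi. set (B := Gf q z * Pi qs z).
    assert (HB : B * (1 - (1-q)*z) = q * z * Pi qs z).
    { unfold B, Gf. field. lra. }
    assert (H1 : 1 <= Pi qs z) by (apply Pi_ge1; auto).
    assert (HB2 : z <= B). {
      assert (B * (1 - (1-q)*z) >= z * (1 - (1-q)*z)) by (rewrite HB; assert (q * Pi qs z >= q * 1) by (apply Rle_ge, Rmult_le_compat_l; lra);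
         assert ((1-q)*z >= (1-q)*1) by (apply Rle_ge, Rmult_le_compat_l; lra);
         assert (0 <= z * (q * Pi qs z - (1 - (1-q)*z))) by (apply Rmult_le_pos; lra); nra).
      apply Rmult_le_reg_r with (1 - (1-q)*z). lra. lra. }
    induction K. simpl sum_0_to. simpl pow. change (P (q::qs) 0%nat) with 0. rewrite Rmult_1_r.
    assert (w * z <= w * B) by (apply Rmult_le_compat_l; lra). lra.
    rewrite s0_shift, pmf_cons_0.
    rewrite (s0_ext K _ (fun k => q * P qs k + (1-q) * P (q::qs) k)) by (intros; apply pmf_cons_S).
    rewrite s0_plus, !s0_scal. specialize (IH K).
    assert (q * (1 - w ^ S K * Pi qs z) <= q * sum_0_to K (P qs)) by (apply Rmult_le_compat_l; lra).
    assert ((1-q) * (1 - w ^ S K * B) <= (1-q) * sum_0_to K (P (q::qs))) by (apply Rmult_le_compat_l; lra).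
    assert (E : w ^ S (S K) * B = w ^ S K * (q * Pi qs z + (1-q) * B)).
    { replace (w ^ S (S K)) with (w ^ S K * w) by (simpl; ring).
      assert (E2 : B = z * (q * Pi qs z + (1-q) * B)) by nra.
      rewrite E2 at 1. replace (w ^ S K * w * (z * (q * Pi qs z + (1 - q) * B))) with
        (w ^ S K * (z * w) * (q * Pi qs z + (1 - q) * B)) by ring. rewrite Hzw. ring. }
    rewrite E. lra.
Qed.


Lemma exp_pow x k : exp x ^ k = exp (INR k * x).
Proof. induction k. simpl. rewrite Rmult_0_l, exp_0. reflexivity.
  rewrite S_INR. simpl pow. rewrite IHk, <- exp_plus. f_equal. ring. Qed.

Lemma exp_le x y : x <= y -> exp x <= exp y.
Proof. intros [H|H]. left; apply exp_increasing; auto. subst; lra. Qed.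

Lemma up_nat b : b < INR (Z.to_nat (up b)).
Proof.
  destruct (archimed b) as [H1 _]. destruct (Z_le_gt_dec (up b) 0).
  - replace (Z.to_nat (up b)) with 0%nat by lia. simpl. apply IZR_le in l. lra.
  - rewrite INR_IZR_INZ, Z2Nat.id by lia. lra.
Qed.

Lemma prob_le1 qs a b : Forall okq qs -> prob_strictly_between qs a b <= 1.
Proof.
  intros H. unfold prob_strictly_between. eapply Rle_trans; [| apply (cdf_le1 qs H (Z.to_nat (up b)))].
  apply s0_le. intros k _. pose proof (pmf_nonneg qs H k).
  destruct (Rlt_dec a (INR k)); [destruct (Rlt_dec (INR k) b)|]; lra.
Qed.

Lemma prob_lower qs a b s t : 0 <= s -> 0 < t ->
  Forall (okz (exp (-s))) qs -> Forall (okz (exp t)) qs ->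
  1 - exp (s * a) * Pi qs (exp (-s)) - 2 * (exp (- t * b) * Pi qs (exp t))
   <= prob_strictly_between qs a b.
Proof.
  intros Hs Ht H1 H2. pose proof (okz_okq _ _ H2) as Hq.
  unfold prob_strictly_between. set (N := Z.to_nat (up b)).
  assert (HN := up_nat b). fold N in HN.
  assert (L: sum_0_to N (fun k => P qs k + (- exp (s*a)) * (exp (-s) ^ k * P qs k)
             + (- exp (- t * b)) * (exp t ^ k * P qs k)) <= sum_0_to N
    (fun k => if Rlt_dec a (INR k) then if Rlt_dec (INR k) b then P qs k else 0 else 0)).
  { apply s0_le. intros k _. pose proof (pmf_nonneg qs Hq k) as Hp.
    rewrite !exp_pow.
    assert (E1 : exp (s * a) * exp (INR k * - s) = exp (s * (a - INR k))) by (rewrite <- exp_plus; f_equal; ring).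
    assert (E2 : exp (- t * b) * exp (INR k * t) = exp (t * (INR k - b))) by (rewrite <- exp_plus; f_equal; ring).
    assert (0 < exp (s * (a - INR k))) by apply exp_pos.
    assert (0 < exp (t * (INR k - b))) by apply exp_pos.
    replace (P qs k + - exp (s * a) * (exp (INR k * - s) * P qs k) + - exp (- t * b) * (exp (INR k * t) * P qs k))
      with (P qs k * (1 - exp (s * (a - INR k)) - exp (t * (INR k - b)))) by (rewrite <- E1, <- E2; ring).
    destruct (Rlt_dec a (INR k)); [destruct (Rlt_dec (INR k) b)|].
    - assert (P qs k * (exp (s * (a - INR k)) + exp (t * (INR k - b))) >= 0) by (apply Rle_ge, Rmult_le_pos; lra). nra.
    - assert (1 <= exp (t * (INR k - b))). { pose proof (exp_ineq1_le (t * (INR k - b))). nra. }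
      assert (P qs k * (exp (s * (a - INR k)) + exp (t * (INR k - b)) - 1) >= 0) by (apply Rle_ge, Rmult_le_pos; lra). nra.
    - assert (1 <= exp (s * (a - INR k))). { pose proof (exp_ineq1_le (s * (a - INR k))). nra. }
      assert (P qs k * (exp (s * (a - INR k)) + exp (t * (INR k - b)) - 1) >= 0) by (apply Rle_ge, Rmult_le_pos; lra). nra. }
  rewrite !s0_plus, !s0_scal in L.
  assert (M1 := mgf_le (exp (-s)) qs (Rlt_le _ _ (exp_pos _)) H1 N).
  assert (M2 := mgf_le (exp t) qs (Rlt_le _ _ (exp_pos _)) H2 N).
  assert (Hgt : 1 <= exp t) by (pose proof (exp_ineq1_le t); lra).
  assert (C := cdf_ge (exp t) qs Hgt H2 N).
  assert (Hi : (/ exp t) ^ S N <= exp (- t * b)).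
  { rewrite <- exp_Ropp, exp_pow. apply exp_le. rewrite S_INR. nra. }
  assert (0 <= Pi qs (exp t)) by (apply Pi_nonneg; [lra|auto]).
  assert ((/ exp t) ^ S N * Pi qs (exp t) <= exp (- t * b) * Pi qs (exp t)) by (apply Rmult_le_compat_r; lra).
  assert (exp (s * a) * sum_0_to N (fun k => exp (- s) ^ k * P qs k) <= exp (s*a) * Pi qs (exp (-s)))
    by (apply Rmult_le_compat_l; [left; apply exp_pos | lra]).
  assert (exp (-t * b) * sum_0_to N (fun k => exp t ^ k * P qs k) <= exp (-t*b) * Pi qs (exp t))
    by (apply Rmult_le_compat_l; [left; apply exp_pos | lra]).
  lra.
Qed.


Lemma ln_le_xm1 x : 0 < x -> ln x <= x - 1.
Proof. intros. pose proof (exp_ineq1_le (ln x)). rewrite exp_ln in H0; lra. Qed.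

Lemma ln_ge_1m x : 0 < x -> 1 - / x <= ln x.
Proof. intros. pose proof (ln_le_xm1 (/ x) (Rinv_0_lt_compat _ H)). rewrite ln_Rinv in H0; lra. Qed.

Lemma pow_le1 x n : 0 <= x <= 1 -> x ^ n <= 1.
Proof. intros. rewrite <- (pow1 n). apply pow_incr. lra. Qed.

Lemma pow_anti x i K : 0 <= x <= 1 -> (i <= K)%nat -> x ^ K <= x ^ i.
Proof. intros Hx HK. replace K with (i + (K - i))%nat by lia. rewrite pow_add.
  assert (0 <= x ^ i) by (apply pow_le; lra). assert (x ^ (K - i) <= 1) by (apply pow_le1; lra).
  assert (0 <= x ^ (K-i)) by (apply pow_le; lra). nra. Qed.

Lemma bernoulli p i : 0 <= p <= 1 -> 1 - INR i * p <= (1 - p) ^ i.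
Proof. intros Hp. induction i. simpl; lra. rewrite S_INR. simpl pow.
  assert (0 <= INR i) by apply pos_INR.
  assert ((1 - p) * (1 - INR i * p) <= (1-p) * (1-p)^i) by (apply Rmult_le_compat_l; lra). nra. Qed.

Lemma s1_S K g : sum_1_to (S K) g = sum_1_to K g + g (S K).
Proof. reflexivity. Qed.

Definition sfun (p : R) (i : nat) := (1 - p) ^ i / (1 - (1 - p) ^ i).

Lemma rpow_lt1 p i : 0 < p <= 1 -> (1 <= i)%nat -> 0 <= (1 - p) ^ i < 1.
Proof. intros. apply pow_lt_1_compat; lra || lia. Qed.

Lemma sfun_upper p i : 0 < p <= 1 -> (1 <= i)%nat -> 0 <= sfun p i <= / (INR i * p).
Proof.
  intros Hp Hi. pose proof (rpow_lt1 p i Hp Hi) as [H0 H1]. unfold sfun.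
  assert (Hip : 0 < INR i * p) by (apply Rmult_lt_0_compat; [apply lt_0_INR; lia| lra]).
  assert (Hb : (1 - p) ^ i * (1 + INR i * p) <= 1).
  { pose proof (poly i p (proj1 Hp)). rewrite Rplus_comm in H.
    assert ((1-p)^i * (1 + INR i * p) <= (1-p)^i * (1+p)^i) by (apply Rmult_le_compat_l; lra).
    rewrite <- Rpow_mult_distr in H2. assert ((1 - p) * (1 + p) = 1 - p*p) by ring. rewrite H3 in H2.
    assert ((1 - p*p)^i <= 1) by (apply pow_le1; nra). lra. }
  split. apply Rmult_le_pos. lra. left; apply Rinv_0_lt_compat; lra.
  apply Rmult_le_reg_r with ((1 - (1-p)^i) * (INR i * p)). nra.
  field_simplify; try lra. nra.
Qed.

Lemma sfun_lower p i : 0 < p <= 1 -> (1 <= i)%nat -> (1 - p) ^ i / (INR i * p) <= sfun p i.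
Proof.
  intros Hp Hi. pose proof (rpow_lt1 p i Hp Hi) as [H0 H1]. unfold sfun.
  assert (Hip : 0 < INR i * p) by (apply Rmult_lt_0_compat; [apply lt_0_INR; lia| lra]).
  pose proof (bernoulli p i (conj (Rlt_le _ _ (proj1 Hp)) (proj2 Hp))).
  unfold Rdiv. apply Rmult_le_compat_l. lra. apply Rinv_le_contravar; lra.
Qed.

Definition H (K : nat) := sum_1_to K (fun i => / INR i).

Lemma H_lower K : ln (INR K + 1) <= H K.
Proof.
  induction K. simpl. rewrite Rplus_0_l, ln_1. unfold H; simpl; lra.
  unfold H; rewrite s1_S. fold (H K). rewrite S_INR.
  assert (0 <= INR K) by apply pos_INR.
  assert (E : INR K + 1 + 1 = (INR K + 1) * (1 + / (INR K + 1))) by (field; lra).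
  assert (0 < / (INR K + 1)) by (apply Rinv_0_lt_compat; lra).
  rewrite E, ln_mult by lra.
  pose proof (ln_le_xm1 (1 + / (INR K + 1)) ltac:(lra)) as HL. lra.
Qed.

Lemma H_upper K : (1 <= K)%nat -> H K <= 1 + ln (INR K).
Proof.
  induction 1. unfold H; simpl. rewrite ln_1. lra.
  unfold H; rewrite s1_S. fold (H m). rewrite S_INR.
  assert (1 <= INR m) by (apply (le_INR 1); lia).
  assert (E : INR m = (INR m + 1) * (1 - / (INR m + 1))) by (field; lra).
  assert (0 < / (INR m + 1) < 1). { split. apply Rinv_0_lt_compat; lra. rewrite <- Rinv_1 at 2. apply Rinv_lt_contravar; lra. }
  assert (ln (INR m) = ln (INR m + 1) + ln (1 - / (INR m + 1))) by (rewrite E at 1; apply ln_mult; lra).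
  pose proof (ln_le_xm1 (1 - / (INR m + 1))). lra.
Qed.

Lemma H_nonneg K : 0 <= H K.
Proof. apply s1_nonneg. intros. left; apply Rinv_0_lt_compat, lt_0_INR; lia. Qed.

Definition Ssum (p : R) (m : nat) := sum_1_to m (sfun p).

Lemma Ssum_upper p m : 0 < p <= 1 -> 0 <= Ssum p m <= H m / p.
Proof.
  intros Hp. unfold Ssum, H. split. apply s1_nonneg. intros; apply sfun_upper; lia || lra.
  unfold Rdiv. rewrite (Rmult_comm (sum_1_to _ _)), <- s1_scal. apply s1_le. intros k Hk.
  destruct (sfun_upper p k Hp ltac:(lia)). rewrite Rinv_mult in H1. lra.
Qed.

Lemma Ssum_lower p m K : 0 < p <= 1 -> (K <= m)%nat -> (1 - p) ^ K * H K / p <= Ssum p m.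
Proof.
  intros Hp HK. unfold Ssum. eapply Rle_trans; [| apply (s1_mono K m)]; auto.
  2: intros; apply sfun_upper; lia || lra.
  unfold H. unfold Rdiv. replace ((1-p)^K * sum_1_to K (fun i => / INR i) * / p) with (sum_1_to K (fun i => ((1-p)^K * / p) * / INR i)) by (rewrite s1_scal; ring). apply s1_le.
  intros k Hk. eapply Rle_trans; [|apply sfun_lower; lia || lra].
  assert ((1-p)^K <= (1-p)^k) by (apply pow_anti; lra || lia).
  assert (0 < INR k) by (apply lt_0_INR; lia).
  unfold Rdiv. rewrite Rinv_mult.
  assert (0 < / INR k) by (apply Rinv_0_lt_compat; lra). assert (0 < / p) by (apply Rinv_0_lt_compat; lra).
  assert (0 <= (1-p)^K) by (apply pow_le; lra).
  assert ((1-p)^K * / INR k <= (1-p)^k * / INR k) by (apply Rmult_le_compat_r; lra).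
  assert ((1-p)^K * / INR k * / p <= (1-p)^k * / INR k * / p) by (apply Rmult_le_compat_r; lra).
  lra.
Qed.


Lemma fold_Pi l c z : fold_right (fun q acc => Gf q z * acc) c l = c * Pi l z.
Proof. induction l; simpl. ring. rewrite IHl. ring. Qed.

Lemma Pi_app l1 l2 z : Pi (l1 ++ l2) z = Pi l1 z * Pi l2 z.
Proof. unfold Pi at 1. rewrite fold_right_app. fold (Pi l2 z). rewrite fold_Pi. ring. Qed.

Lemma Pi_seq g z phi m : (forall i, (1 <= i <= m)%nat -> 0 <= Gf (g i) z <= exp (phi i)) ->
  0 <= Pi (map g (seq 1 m)) z <= exp (sum_1_to m phi).
Proof.
  induction m; intros Hb. simpl. rewrite exp_0. lra.
  rewrite seq_S, map_app, Pi_app. simpl map. rewrite s1_S, exp_plus.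
  destruct IHm as [A B]. intros; apply Hb; lia.
  destruct (Hb (1 + m)%nat ltac:(lia)) as [C D]. replace (S m) with (1 + m)%nat by lia.
  replace (Pi (g (1+m)%nat :: nil) z) with (Gf (g (1+m)%nat) z) by (unfold Pi; simpl; ring).
  split. apply Rmult_le_pos; auto. apply Rmult_le_compat; auto.
Qed.

Lemma Forall_seq (Q : R -> Prop) g m : (forall i, (1 <= i <= m)%nat -> Q (g i)) -> Forall Q (map g (seq 1 m)).
Proof. intros Hb. apply Forall_forall. intros x Hx. apply in_map_iff in Hx. destruct Hx as [i [<- Hi]].
  apply in_seq in Hi. apply Hb. lia. Qed.

Lemma Gf_up q y eta : 0 < q <= 1 -> 0 <= y -> 0 <= y * ((1 - q) / q) <= eta -> eta < 1 ->
  okz (1 + y) q /\ 0 <= Gf q (1 + y) <= exp (y + y * ((1 - q) / q) / (1 - eta)).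
Proof.
  intros Hq Hy Hu He. set (u := y * ((1 - q) / q)) in *.
  assert (Hd : 1 - (1 - q) * (1 + y) = q * (1 - u)) by (unfold u; field; lra).
  assert (0 < 1 - u) by lra.
  split. split. lra. nra.
  assert (E : Gf q (1 + y) = (1 + y) * / (1 - u)) by (unfold Gf; rewrite Hd; field; lra).
  rewrite E. split. apply Rmult_le_pos. lra. left; apply Rinv_0_lt_compat; lra.
  rewrite exp_plus. apply Rmult_le_compat. lra. left; apply Rinv_0_lt_compat; lra.
  pose proof (exp_ineq1_le y); lra.
  pose proof (exp_ineq1_le (u / (1 - u))) as X.
  assert (1 + u / (1 - u) = / (1 - u)) by (field; lra).
  assert (W1 : u / (1 - u) <= u / (1 - eta)). { unfold Rdiv. apply Rmult_le_compat_l. lra. apply Rinv_le_contravar; lra. }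
  pose proof (exp_le _ _ W1). lra.
Qed.

Lemma Gf_low q w eta : 0 < q <= 1 -> 0 <= w < 1 -> 0 <= w * ((1 - q) / q) <= eta ->
  okz (1 - w) q /\ 0 <= Gf q (1 - w) <= exp (- w - w * ((1 - q) / q) / (1 + eta)).
Proof.
  intros Hq Hw Hv. set (v := w * ((1 - q) / q)) in *.
  assert (Hd : 1 - (1 - q) * (1 - w) = q * (1 + v)) by (unfold v; field; lra).
  split. split. lra. nra.
  assert (E : Gf q (1 - w) = (1 - w) * / (1 + v)) by (unfold Gf; rewrite Hd; field; lra).
  rewrite E. split. apply Rmult_le_pos. lra. left; apply Rinv_0_lt_compat; lra.
  replace (- w - v / (1 + eta)) with (- w + - (v / (1 + eta))) by ring. rewrite exp_plus. apply Rmult_le_compat. lra. left; apply Rinv_0_lt_compat; lra.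
  pose proof (exp_ineq1_le (-w)); lra.
  pose proof (exp_ineq1_le (- (v / (1 + v)))) as X.
  assert (1 - v / (1 + v) = / (1 + v)) by (field; lra).
  assert (v / (1 + eta) <= v / (1 + v)). { unfold Rdiv. apply Rmult_le_compat_l. lra. apply Rinv_le_contravar; lra. }
  assert (W1 : - (v / (1 + v)) <= - (v / (1 + eta))) by lra.
  pose proof (exp_le _ _ W1). lra.
Qed.


Lemma s1_const m c : sum_1_to m (fun _ => c) = INR m * c.
Proof. induction m. simpl; ring. rewrite s1_S, IHm, S_INR. ring. Qed.

Definition qsof (p : R) (m : nat) := map (fun i => 1 - (1 - p) ^ i) (seq 1 m).

Lemma q_props p i : 0 < p <= 1 -> (1 <= i)%nat ->
  0 < 1 - (1 - p) ^ i <= 1 /\ (1 - (1 - (1 - p) ^ i)) / (1 - (1 - p) ^ i) = sfun p i.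
Proof. intros Hp Hi. pose proof (rpow_lt1 p i Hp Hi). split. lra. unfold sfun. f_equal. ring. Qed.

Lemma upper_tail p m eta b : 0 < p <= 1 -> 0 < eta < 1 -> 0 <= b ->
  let y := eta * p in
  Forall (okz (exp (ln (1 + y)))) (qsof p m) /\
  exp (- ln (1 + y) * b) * Pi (qsof p m) (exp (ln (1 + y)))
    <= exp (- (b * y - b * y * y) + INR m * y + y * Ssum p m / (1 - eta)).
Proof.
  intros Hp He Hb y. assert (Hy : 0 < y) by (unfold y; nra).
  rewrite exp_ln by lra.
  assert (Hf : forall i, (1 <= i <= m)%nat -> okz (1 + y) (1 - (1-p)^i) /\
     0 <= Gf (1 - (1-p)^i) (1 + y) <= exp (y + y * sfun p i / (1 - eta))).
  { intros i Hi. destruct (q_props p i Hp ltac:(lia)) as [A B]. rewrite <- B. apply Gf_up; try lra.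
    rewrite B. destruct (sfun_upper p i Hp ltac:(lia)) as [C D].
    assert (1 <= INR i) by (apply (le_INR 1); lia).
    assert (/ (INR i * p) <= / p). { apply Rinv_le_contravar; nra. }
    assert (y * / p = eta) by (unfold y; field; lra).
    split. apply Rmult_le_pos; lra.
    assert (y * sfun p i <= y * / p) by (apply Rmult_le_compat_l; lra). lra. }
  split. apply Forall_seq. intros; apply Hf; auto.
  destruct (Pi_seq (fun i => 1 - (1-p)^i) (1 + y) (fun i => y + y * sfun p i / (1 - eta)) m) as [A B].
  intros; apply Hf; auto. fold (qsof p m) in A, B.
  assert (E : sum_1_to m (fun i => y + y * sfun p i / (1 - eta)) = INR m * y + y * Ssum p m / (1 - eta)).
  { rewrite s1_plus, s1_const. unfold Ssum.
    replace (y * sum_1_to m (sfun p) / (1 - eta)) with ((y / (1 - eta)) * sum_1_to m (sfun p)) by (field; lra).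
    rewrite <- s1_scal. f_equal. apply s1_ext; intros; field; lra. }
  rewrite E in B.
  assert (L : y / (1 + y) <= ln (1 + y)). { pose proof (ln_ge_1m (1 + y) ltac:(lra)).
    assert (1 - / (1 + y) = y / (1 + y)) by (field; lra). lra. }
  assert (L2 : y - y * y <= y / (1 + y)). { apply Rmult_le_reg_r with (1 + y). lra. unfold Rdiv.
    rewrite Rmult_assoc, Rinv_l by lra. nra. }
  assert (exp (- ln (1 + y) * b) <= exp (- (b * y - b * y * y))) by (apply exp_le; nra).
  rewrite Rplus_assoc, exp_plus. 
  apply Rmult_le_compat; auto. left; apply exp_pos.
Qed.

Lemma lower_tail p m eta a : 0 < p <= 1 -> 0 < eta < 1 ->
  let w := eta * p in
  0 <= - ln (1 - w) /\
  Forall (okz (exp (- - ln (1 - w)))) (qsof p m) /\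
  exp (- ln (1 - w) * a) * Pi (qsof p m) (exp (- - ln (1 - w)))
    <= exp (Rmax a 0 * (w / (1 - w)) - (INR m * w + w * Ssum p m / (1 + eta))).
Proof.
  intros Hp He w. assert (Hw : 0 < w < 1) by (unfold w; split; nra).
  rewrite Ropp_involutive, exp_ln by lra.
  assert (Hs : - ln (1 - w) <= w / (1 - w)). { pose proof (ln_ge_1m (1 - w) ltac:(lra)).
    assert (1 - / (1 - w) = - (w / (1 - w))) by (field; lra). lra. }
  assert (Hs0 : 0 <= - ln (1 - w)). { assert (W2 : ln (1 - w) < ln 1) by (apply ln_increasing; lra). rewrite ln_1 in W2. lra. }
  split; auto.
  assert (Hf : forall i, (1 <= i <= m)%nat -> okz (1 - w) (1 - (1-p)^i) /\
     0 <= Gf (1 - (1-p)^i) (1 - w) <= exp (- w - w * sfun p i / (1 + eta))).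
  { intros i Hi. destruct (q_props p i Hp ltac:(lia)) as [A B]. rewrite <- B. apply Gf_low; try lra.
    rewrite B. destruct (sfun_upper p i Hp ltac:(lia)) as [C D].
    assert (1 <= INR i) by (apply (le_INR 1); lia).
    assert (/ (INR i * p) <= / p). { apply Rinv_le_contravar; nra. }
    assert (w * / p = eta) by (unfold w; field; lra).
    split. apply Rmult_le_pos; lra.
    assert (w * sfun p i <= w * / p) by (apply Rmult_le_compat_l; lra). lra. }
  split. apply Forall_seq. intros; apply Hf; auto.
  destruct (Pi_seq (fun i => 1 - (1-p)^i) (1 - w) (fun i => - w - w * sfun p i / (1 + eta)) m) as [A B].
  intros; apply Hf; auto. fold (qsof p m) in A, B.
  assert (E : sum_1_to m (fun i => - w - w * sfun p i / (1 + eta)) = - (INR m * w + w * Ssum p m / (1 + eta))).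
  { unfold Rminus. rewrite s1_plus, s1_const. unfold Ssum.
    replace (- (INR m * w + w * sum_1_to m (sfun p) / (1 + eta))) with (INR m * - w + (- w / (1 + eta)) * sum_1_to m (sfun p)) by (field; lra).
    rewrite <- s1_scal. f_equal. apply s1_ext; intros; field; lra. }
  rewrite E in B.
  assert (exp (- ln (1 - w) * a) <= exp (Rmax a 0 * (w / (1 - w)))).
  { apply exp_le. assert (a <= Rmax a 0) by apply Rmax_l. assert (0 <= Rmax a 0) by apply Rmax_r.
    assert (- ln (1 - w) * a <= - ln (1 - w) * Rmax a 0) by (apply Rmult_le_compat_l; lra).
    assert (- ln (1 - w) * Rmax a 0 <= w / (1 - w) * Rmax a 0) by (apply Rmult_le_compat_r; lra). lra. }
  replace (Rmax a 0 * (w / (1 - w)) - (INR m * w + w * Ssum p m / (1 + eta))) with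
    (Rmax a 0 * (w / (1 - w)) + - (INR m * w + w * Ssum p m / (1 + eta))) by ring. rewrite exp_plus.
  apply Rmult_le_compat; auto. left; apply exp_pos.
Qed.

Lemma prob_bound p m eta a b : 0 < p <= 1 -> 0 < eta < 1 -> 0 <= b ->
  1 - exp (Rmax a 0 * (eta * p / (1 - eta * p)) - (INR m * (eta * p) + eta * p * Ssum p m / (1 + eta)))
    - 2 * exp (- (b * (eta * p) - b * (eta * p) * (eta * p)) + INR m * (eta * p) + eta * p * Ssum p m / (1 - eta))
  <= prob_strictly_between (qsof p m) a b.
Proof.
  intros Hp He Hb.
  destruct (lower_tail p m eta a Hp He) as [S0 [F1 L]].
  destruct (upper_tail p m eta b Hp He Hb) as [F2 U].
  assert (W3 : 0 < ln (1 + eta * p)). { rewrite <- ln_1. apply ln_increasing; nra. }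
  pose proof (prob_lower (qsof p m) a b _ _ S0 W3 F1 F2). lra.
Qed.


Lemma inv_1m_le x : 0 <= x <= 1/2 -> / (1 - x) <= 1 + 2 * x.
Proof. intros. apply Rmult_le_reg_r with (1 - x). lra. rewrite Rinv_l by lra. timeout 10 nra. Qed.

Lemma core_up e eps p l m N Q S :
  0 < e <= 1/2 -> e <= eps -> 0 < p <= 1 -> 1 <= l -> 32 <= e * l ->
  0 <= m -> (N - 6) / 7 <= m -> 0 <= Q -> 0 <= S -> S <= (1 + l) + Q + Q / l ->
  2 + 2 * l + e <= e * N / 50 ->
  let eta := e / 8 in let y := eta * p in let b := (1 + eps) * (m + Q) in
  - (b * y - b * y * y) + m * y + y * S / (1 - eta) <= - (e * e / 160) * p * N.
Proof.
  intros He Heps Hp Hl Hel Hm0 Hm HQ HS0 HS Hbig eta y b.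
  set (T := m + Q) in *.
  assert (Hy : 0 < y <= eta) by (unfold y, eta; split; timeout 10 nra).
  assert (Hb0 : 0 <= b) by (unfold b, T; timeout 10 nra).
  assert (Hby : b * y <= (1 + eps) * T * eta).
  { assert (b * y <= b * eta) by (apply Rmult_le_compat_l; lra). unfold b in *. lra. }
  assert (Hinv : / (1 - eta) <= 1 + 2 * eta) by (apply inv_1m_le; unfold eta; lra).
  assert (HS1 : S / (1 - eta) <= S * (1 + 2 * eta)) by (unfold Rdiv; apply Rmult_le_compat_l; lra).
  assert (Hil : / l <= e / 32). { apply Rmult_le_reg_r with l. lra. rewrite Rinv_l by lra. lra. }
  assert (HQl : (1 + 2 * eta) * (Q / l) <= e * Q / 16).
  { unfold Rdiv. assert (Q * / l <= Q * (e/32)) by (apply Rmult_le_compat_l; lra).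
    assert (0 <= Q * / l) by (apply Rmult_le_pos; [lra| left; apply Rinv_0_lt_compat; lra]).
    assert (eta <= 1/16) by (unfold eta; lra). timeout 10 nra. }
  assert (HS2 : S * (1 + 2 * eta) <= (1 + 2 * eta) * (1 + l) + (1 + 2 * eta) * Q + e * Q / 16).
  { assert (S * (1 + 2*eta) <= ((1 + l) + Q + Q / l) * (1 + 2 * eta)) by (apply Rmult_le_compat_r; unfold eta; lra).
    lra. }
  set (D := (b - m) - b * y - S / (1 - eta)).
  assert (HD1 : D >= eps * T * (1 - eta) - eta * T - 2 * (1 + l) - 2 * eta * Q - e * Q / 16).
  { unfold D. assert (b - m = Q + eps * T) by (unfold b, T; ring).
    assert ((1 + 2*eta) * (1 + l) <= 2 * (1 + l)) by (unfold eta; timeout 10 nra). timeout 10 nra. }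
  assert (HT : Q <= T) by (unfold T; lra).
  assert (HD2 : D >= e * T / 2 - 2 * (1 + l)).
  { assert (eps * T * (1 - eta) >= e * T * (1 - eta)) by (apply Rle_ge, Rmult_le_compat_r; unfold eta; [lra| apply Rmult_le_compat_r; lra]).
    assert (2 * eta * Q <= 2 * eta * T) by (apply Rmult_le_compat_l; unfold eta; lra).
    assert (e * Q / 16 <= e * T / 16) by (unfold Rdiv; apply Rmult_le_compat_r; [lra| apply Rmult_le_compat_l; lra]).
    assert (e * T * (1 - eta) - eta * T - 2 * eta * T - e * T / 16 >= e * T / 2).
    { unfold eta. assert (0 <= T) by (unfold T; lra).
      assert (0 <= T * e * (1/16 - e/8)) by (apply Rmult_le_pos; [apply Rmult_le_pos|]; lra). lra. }
    lra. }
  assert (HD3 : D >= e * N / 20).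
  { assert (e * T / 2 >= e * ((N - 6) / 7) / 2) by (apply Rle_ge; unfold Rdiv; apply Rmult_le_compat_r; [lra| apply Rmult_le_compat_l; unfold T; lra]).
    lra. }
  replace (- (b * y - b * y * y) + m * y + y * S / (1 - eta)) with (- y * D) by (unfold D; field; unfold eta; lra).
  assert (y * D >= y * (e * N / 20)) by (apply Rle_ge, Rmult_le_compat_l; lra).
  assert (y * (e * N / 20) = (e * e / 160) * p * N) by (unfold y, eta; field). lra.
Qed.

Lemma core_low e eps p m N Q S :
  0 < e <= 1/2 -> e <= eps -> 0 < p <= 1 -> 
  0 <= m -> (N - 6) / 7 <= m -> 0 <= Q -> 0 <= S -> Q - e * N / 40 <= S -> 40 <= N ->
  let eta := e / 8 in let w := eta * p in let a := (1 - eps) * (m + Q) in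
  Rmax a 0 * (w / (1 - w)) - (m * w + w * S / (1 + eta)) <= - (e * e / 160) * p * N.
Proof.
  intros He Heps Hp Hm0 Hm HQ HS0 HS HN eta w a.
  set (T := m + Q) in *.
  assert (Hw : 0 < w <= eta) by (unfold w, eta; split; timeout 10 nra).
  assert (Hinv : / (1 - w) <= 1 + 2 * eta) by (eapply Rle_trans; [apply inv_1m_le; unfold eta in *; lra| lra]).
  assert (HS1 : S / (1 + eta) >= S * (1 - eta)).
  { replace (S / (1 + eta)) with (S * (1 - eta) + S * (eta * eta) / (1 + eta)) by (field; unfold eta; lra).
    assert (0 <= S * (eta * eta) / (1 + eta)).
    { apply Rmult_le_pos. apply Rmult_le_pos; [lra| apply Rmult_le_pos; unfold eta; lra]. left; apply Rinv_0_lt_compat; unfold eta; lra. }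
    lra. }
  assert (Hkey : m + S / (1 + eta) - Rmax a 0 / (1 - w) >= e * N / 20).
  { destruct (Rle_dec a 0) as [Ha|Ha].
    - rewrite Rmax_right by lra. unfold Rdiv at 2. rewrite Rmult_0_l.
      assert (0 <= S / (1 + eta)) by (apply Rmult_le_pos; [lra| left; apply Rinv_0_lt_compat; unfold eta; lra]).
      assert ((N - 6) / 7 >= e * N / 20) by (apply Rle_ge; apply Rmult_le_reg_r with 140; [lra|]; timeout 10 nra). lra.
    - rewrite Rmax_left by lra.
      assert (a / (1 - w) <= a * (1 + 2 * eta)) by (unfold Rdiv; apply Rmult_le_compat_l; lra).
      assert (S * (1 - eta) >= (Q - e * N / 40) * (1 - eta)) by (apply Rle_ge, Rmult_le_compat_r; unfold eta; lra).
      assert (m >= m * (1 - eta)) by (unfold eta; timeout 10 nra).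
      assert (0 <= T) by (unfold T; lra).
      assert (Hc : m + S / (1 + eta) - a / (1 - w) >= T * (eps - 3 * eta + 2 * eps * eta) - e * N / 40).
      { assert (e * N / 40 * (1 - eta) <= e * N / 40) by (unfold eta; timeout 10 nra).
        assert (E : m*(1-eta) + Q*(1-eta) - a*(1+2*eta) = T*(eps - 3*eta + 2*eps*eta)) by (unfold a, T; ring).
        lra. }
      assert (T * (eps - 3 * eta + 2 * eps * eta) >= T * (5 * e / 8)).
      { apply Rle_ge, Rmult_le_compat_l. lra. unfold eta. timeout 10 nra. }
      assert (T * (5 * e / 8) >= (N - 6) / 7 * (5 * e / 8)) by (apply Rle_ge, Rmult_le_compat_r; unfold T; lra).
      timeout 10 nra. }
  set (I := m + S / (1 + eta) - Rmax a 0 / (1 - w)) in *.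
  replace (Rmax a 0 * (w / (1 - w)) - (m * w + w * S / (1 + eta))) with (- w * I) by (unfold I; field; unfold eta in *; lra).
  assert (w * I >= w * (e * N / 20)) by (apply Rle_ge, Rmult_le_compat_l; lra).
  assert (w * (e * N / 20) = (e * e / 160) * p * N) by (unfold w, eta; field). lra.
Qed.


Lemma ln_le_mono x y : 0 < x -> x <= y -> ln x <= ln y.
Proof. intros Hx [H|H]. left; apply ln_increasing; auto. subst; lra. Qed.

Lemma ln_small d y : 0 < d -> 0 < y -> 4 / (d * d) <= y -> ln y <= d * y.
Proof.
  intros Hd Hy Hb. assert (Hs : 0 < sqrt y) by (apply sqrt_lt_R0; lra).
  assert (E : ln y = 2 * ln (sqrt y)). { rewrite <- (sqrt_sqrt y) at 1 by lra. rewrite ln_mult by lra. ring. }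
  pose proof (ln_le_xm1 (sqrt y) Hs) as Y0.
  assert (Y1 : 2 / d <= sqrt y). { rewrite <- (sqrt_pow2 (2 / d)) by (unfold Rdiv; apply Rmult_le_pos; [lra| left; apply Rinv_0_lt_compat; lra]).
    apply sqrt_le_1_alt. replace ((2 / d) ^ 2) with (4 / (d * d)) by (field; lra). lra. }
  assert (Y2 : d * sqrt y >= 2). { apply Rle_ge. apply Rmult_le_reg_r with (/ d). apply Rinv_0_lt_compat; lra.
    replace (d * sqrt y * / d) with (sqrt y) by (field; lra). unfold Rdiv in Y1. lra. }
  assert (Y3 : y = sqrt y * sqrt y) by (rewrite sqrt_sqrt; lra).
  assert (Y4 : d * y = (d * sqrt y) * sqrt y) by (rewrite Y3 at 1; ring).
  assert (d * sqrt y * sqrt y >= 2 * sqrt y) by (apply Rle_ge, Rmult_le_compat_r; lra). lra.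
Qed.

Lemma S_lower_core (p F N l Q e : R) (m : nat) :
  0 < p <= 1 -> 28 < F -> 0 < e <= 1/2 -> 40 <= N -> l = ln N -> 4 <= l -> 400 <= e * l ->
  ln l <= (e / 4) * l -> 1 + l <= e * N / 1000 -> N / (F * l) <= / p -> Q = N / F ->
  (N - 6) / 7 <= INR m -> INR m <= N ->
  Q - e * N / 40 <= Ssum p m.
Proof.
  intros Hp HF He HN Hl Hl4 Hel Hll Hbig Hip HQ Hm1 Hm2.
  set (x := N / (l * l)).
  assert (Hx0 : 0 < x) by (unfold x; apply Rdiv_lt_0_compat; nra).
  set (K := Z.to_nat (up x)).
  destruct (archimed x) as [A1 A2].
  assert (HK : INR K = IZR (up x)). { unfold K. rewrite INR_IZR_INZ, Z2Nat.id. reflexivity.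
    apply le_IZR. lra. }
  assert (HKx : x < INR K <= x + 1) by lra.
  assert (Hx14 : x <= N / 16). { unfold x. unfold Rdiv. apply Rmult_le_compat_l. lra.
    apply Rinv_le_contravar; nra. }
  assert (HKm : (K <= m)%nat). { apply INR_le. lra. }
  assert (HK1 : (1 <= K)%nat). { destruct K. simpl in HKx. lra. lia. }
  pose proof (Ssum_lower p m K Hp HKm) as SL.
  assert (HH0 : 0 <= H K) by apply H_nonneg.
  assert (Hb := bernoulli p K (conj (Rlt_le _ _ (proj1 Hp)) (proj2 Hp))).
  assert (Hp0 : 0 < / p) by (apply Rinv_0_lt_compat; lra).
  assert (S1 : (1 - INR K * p) * H K / p <= (1 - p) ^ K * H K / p).
  { unfold Rdiv. apply Rmult_le_compat_r. lra. apply Rmult_le_compat_r; lra. }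
  assert (E1 : (1 - INR K * p) * H K / p = H K * / p - INR K * H K) by (field; lra).
  assert (HKl : l - 2 * ln l <= H K).
  { eapply Rle_trans; [| apply H_lower].
    assert (W5 : ln x = l - 2 * ln l).
    { assert (0 < l * l) by nra. assert (0 < / (l * l)) by (apply Rinv_0_lt_compat; lra).
      unfold x. unfold Rdiv. rewrite (ln_mult N) by lra. rewrite ln_Rinv by lra. rewrite ln_mult by lra.
      rewrite Hl. ring. }
    rewrite <- W5. apply ln_le_mono; lra. }
  assert (Hll0 : 0 <= ln l). { rewrite <- ln_1. apply ln_le_mono; lra. }
  assert (Hfac0 : 0 <= N / (F * l)) by (unfold Rdiv; apply Rmult_le_pos; [lra| left; apply Rinv_0_lt_compat; nra]).
  assert (S2 : (l - 2 * ln l) * (N / (F * l)) <= H K * / p).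
  { apply Rmult_le_compat; try lra. assert ((e/4) * l <= l / 8) by nra. lra. }
  assert (E2 : (l - 2 * ln l) * (N / (F * l)) = Q - 2 * (ln l / l) * Q) by (rewrite HQ; field; nra).
  assert (HQ28 : Q <= N / 28). { rewrite HQ. unfold Rdiv. apply Rmult_le_compat_l. lra. apply Rinv_le_contravar; lra. }
  assert (HQ0 : 0 <= Q) by (rewrite HQ; unfold Rdiv; apply Rmult_le_pos; [lra| left; apply Rinv_0_lt_compat; lra]).
  assert (Hlnl : ln l / l <= e / 4). { apply Rmult_le_reg_r with l. lra. unfold Rdiv. rewrite Rmult_assoc, Rinv_l by lra. lra. }
  assert (S3 : 2 * (ln l / l) * Q <= e * N / 56).
  { assert (0 <= ln l / l) by (unfold Rdiv; apply Rmult_le_pos; [lra| left; apply Rinv_0_lt_compat; lra]).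
    assert (2 * (ln l / l) * Q <= 2 * (e / 4) * (N / 28)) by (apply Rmult_le_compat; lra). lra. }
  assert (HHK : H K <= 1 + l). { eapply Rle_trans. apply H_upper; auto.
    assert (ln (INR K) <= l) by (rewrite Hl; apply ln_le_mono; [apply lt_0_INR; lia| apply le_INR in HKm; lra]). lra. }
  assert (S4 : INR K * H K <= (x + 1) * (1 + l)) by (apply Rmult_le_compat; try lra; apply pos_INR).
  assert (E4 : (x + 1) * (1 + l) = N * (1 + l) / (l * l) + (1 + l)) by (unfold x; field; lra).
  assert (S5 : N * (1 + l) / (l * l) <= 2 * N / l).
  { unfold Rdiv. replace (N * (1 + l) * / (l * l)) with ((N / l) * ((1 + l) / l)) by (field; lra).
    replace (2 * N * / l) with ((N / l) * 2) by (field; lra).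
    apply Rmult_le_compat_l. unfold Rdiv; apply Rmult_le_pos; [lra| left; apply Rinv_0_lt_compat; lra].
    apply Rmult_le_reg_r with l. lra. unfold Rdiv. rewrite Rmult_assoc, Rinv_l by lra. lra. }
  assert (S6 : 2 * N / l <= e * N / 200).
  { assert (/ l <= e / 400). { apply Rmult_le_reg_r with l. lra. rewrite Rinv_l by lra. lra. }
    unfold Rdiv. assert (2 * N * / l <= 2 * N * (e / 400)) by (apply Rmult_le_compat_l; lra). lra. }
  assert (e * N / 56 + e * N / 200 + e * N / 1000 <= e * N / 40).
  { assert (0 <= e * N) by nra. lra. }
  lra.
Qed.


Definition ev (Q : nat -> Prop) := exists N0, forall n, (N0 <= n)%nat -> Q n.

Lemma ev_and (Q1 Q2 : nat -> Prop) : ev Q1 -> ev Q2 -> ev (fun n => Q1 n /\ Q2 n).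
Proof. intros [a Ha] [b Hb]. exists (Nat.max a b). intros n Hn. split; [apply Ha|apply Hb]; lia. Qed.

Lemma ev_ge c : ev (fun n => c <= INR n).
Proof. exists (Z.to_nat (up c)). intros n Hn. pose proof (up_nat c). apply le_INR in Hn. lra. Qed.

Lemma ev_ln c : ev (fun n => c <= ln (INR n)).
Proof. destruct (ev_ge (exp c)) as [a Ha]. exists a. intros n Hn. specialize (Ha n Hn).
  rewrite <- (ln_exp c). apply ln_le_mono; auto. apply exp_pos. Qed.

Lemma ev_lnN d : 0 < d -> ev (fun n => ln (INR n) <= d * INR n).
Proof. intros Hd. destruct (ev_ge (Rmax 1 (4 / (d * d)))) as [a Ha]. exists a. intros n Hn. specialize (Ha n Hn).
  pose proof (Rmax_l 1 (4 / (d*d))). pose proof (Rmax_r 1 (4 / (d*d))).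
  apply ln_small; lra. Qed.

Lemma edge_facts (f : nat -> R) (f_gt : forall n : nat, f n > 28) n : 40 <= INR n -> 4 <= ln (INR n) ->
  let p := edge_p f n in let N := INR n in let l := ln N in
  0 < p <= 1 /\ N / (f n * l) <= / p /\ / p <= 1 + N / (f n * l) /\ l <= p * N.
Proof.
  intros HN Hl p N l. specialize (f_gt n). change (40 <= N) in HN. change (4 <= l) in Hl.
  assert (Hfl : 0 < f n * l) by (apply Rmult_lt_0_compat; lra).
  assert (Hx : 0 < f n * l / N) by (apply Rdiv_lt_0_compat; lra).
  assert (E : / (f n * l / N) = N / (f n * l)) by (field; split; lra).
  assert (0 < N / (f n * l)) by (apply Rdiv_lt_0_compat; lra).
  assert (HlN : l <= N) by (unfold l; pose proof (ln_le_xm1 N ltac:(lra)); lra).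
  unfold p, edge_p. fold N l. unfold Rmin. destruct (Rle_dec 1 (f n * l / N)).
  - rewrite Rinv_1. split. lra. split. rewrite <- E. rewrite <- Rinv_1. apply Rinv_le_contravar; lra.
    split; lra.
  - rewrite E. split. lra. split. lra. split. lra.
    replace (f n * l / N * N) with (f n * l) by (field; lra). nra.
Qed.


Lemma m_facts n : (INR n - 6) / 7 <= INR (Nat.div n 7) /\ INR (Nat.div n 7) <= INR n.
Proof.
  assert (A : (7 * (n / 7) <= n)%nat) by (pose proof (Nat.div_mod n 7 ltac:(lia)); lia).
  assert (B : (n <= 7 * (n / 7) + 6)%nat). { pose proof (Nat.div_mod n 7 ltac:(lia)). pose proof (Nat.mod_upper_bound n 7 ltac:(lia)). lia. }
  pose proof (pos_INR (n / 7)). apply le_INR in A. apply le_INR in B. rewrite mult_INR in A. rewrite plus_INR, mult_INR in B.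
  assert (E7 : INR 7 = 7) by (simpl; lra). assert (E6 : INR 6 = 6) by (simpl; lra). rewrite E7 in A, B. rewrite E6 in B.
  split; lra.
Qed.

Lemma S_upper_n p m N F l : 0 < p <= 1 -> / p <= 1 + N / (F * l) -> (1 <= m)%nat -> INR m <= N ->
  l = ln N -> 1 <= l -> 0 < F -> Ssum p m <= (1 + l) + N / F + N / F / l.
Proof.
  intros Hp Hip Hm HmN Hl Hl1 HF.
  destruct (Ssum_upper p m Hp) as [_ A].
  pose proof (H_upper m Hm) as B.
  assert (Z1 : ln (INR m) <= l) by (rewrite Hl; apply ln_le_mono; [apply lt_0_INR; lia| lra]).
  assert (Z2 : 0 <= ln (INR m)) by (rewrite <- ln_1; apply ln_le_mono; [lra| apply (le_INR 1); lia]).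
  assert (Z3 : 0 < / p) by (apply Rinv_0_lt_compat; lra).
  assert (Z4 : H m / p <= (1 + l) * (1 + N / (F * l))) by (unfold Rdiv; apply Rmult_le_compat; try lra; apply H_nonneg).
  assert ((1 + l) * (1 + N / (F * l)) = (1 + l) + N / F + N / F / l) by (field; lra). lra.
Qed.

Theorem lemma3 (f : nat -> R)
  (f_mono : forall m n : nat, (m <= n)%nat -> f m <= f n)
  (f_gt : forall n : nat, f n > 28)
  (eps : R) (heps : eps > 0) :
  Un_cv (fun n => prob_strictly_between (succ_probs f n)
                    ((1 - eps) * target f n) ((1 + eps) * target f n)) 1.
Proof.
  intros e0 He0.
  set (e := Rmin eps (1/2)).
  assert (He : 0 < e <= 1/2). { unfold e, Rmin. destruct (Rle_dec eps (1/2)); lra. }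
  assert (Heps : e <= eps) by apply Rmin_l.
  set (L := Rabs (ln (e0 / 4))).
  assert (HL : exp (- L) <= e0 / 4).
  { rewrite <- (exp_ln (e0/4)) by lra. apply exp_le. unfold L. pose proof (Rabs_Ropp (ln (e0/4))).
    pose proof (RRle_abs (- ln (e0 / 4))). lra. }
  assert (HL0 : 0 <= L) by apply Rabs_pos.
  destruct (ev_and _ _ (ev_ge 40) (ev_and _ _ (ev_ge (4000 / e))
      (ev_and _ _ (ev_ln 4) (ev_and _ _ (ev_ln (400 / e)) (ev_and _ _ (ev_ln (160 * L / (e * e)))
      (ev_and _ _ (ev_ln (4 / ((e/4) * (e/4)))) (ev_lnN (e / 2000) ltac:(lra))))))))
    as [N0 HN0].
  exists N0. intros n Hn. destruct (HN0 n Hn) as [C1 [C2 [C3 [C4 [C5 [C6 C7]]]]]].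
  set (N := INR n) in *. set (l := ln N) in *.
  destruct (edge_facts f f_gt n C1 C3) as [Hp [Hip1 [Hip2 HpN]]].
  fold N l in Hp, Hip1, Hip2, HpN. set (p := edge_p f n) in *.
  destruct (m_facts n) as [Hm1 Hm2]. fold N in Hm1, Hm2.
  set (m := Nat.div n 7) in *.
  specialize (f_gt n).
  assert (HeN : 4000 <= e * N). { apply Rmult_le_reg_r with (/ e). apply Rinv_0_lt_compat; lra.
    replace (e * N * / e) with N by (field; lra). exact C2. }
  assert (Hel : 400 <= e * l). { apply Rmult_le_reg_r with (/ e). apply Rinv_0_lt_compat; lra.
    replace (e * l * / e) with l by (field; lra). exact C4. }
  assert (HLl : L <= e * e / 160 * l). { assert (0 < e * e) by nra. apply Rmult_le_reg_r with (160 / (e * e)).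
    apply Rdiv_lt_0_compat; lra. replace (e * e / 160 * l * (160 / (e * e))) with l by (field; lra).
    replace (L * (160 / (e * e))) with (160 * L / (e * e)) by (field; lra). exact C5. }
  assert (Hlnl : ln l <= e / 4 * l) by (apply ln_small; lra).
  assert (Hm7 : (1 <= m)%nat). { apply INR_le. simpl. lra. }
  set (Q := N / f n).
  assert (HQ0 : 0 <= Q) by (unfold Q; unfold Rdiv; apply Rmult_le_pos; [lra| left; apply Rinv_0_lt_compat; lra]).
  assert (HSu : Ssum p m <= (1 + l) + Q + Q / l) by (unfold Q; apply (S_upper_n p m N (f n) l); auto; lra).
  assert (HSl : Q - e * N / 40 <= Ssum p m).
  { apply (S_lower_core p (f n) N l Q e m); auto; try lra. }
  assert (HS0 : 0 <= Ssum p m) by (apply Ssum_upper; auto).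
  assert (Hm0 : 0 <= INR m) by apply pos_INR.
  assert (U := core_up e eps p l (INR m) N Q (Ssum p m) He Heps Hp ltac:(lra) ltac:(lra) Hm0 Hm1 HQ0 HS0 HSu ltac:(lra)).
  assert (Lw := core_low e eps p (INR m) N Q (Ssum p m) He Heps Hp Hm0 Hm1 HQ0 HS0 HSl C1).
  cbv zeta in U, Lw.
  assert (Hb : 0 <= (1 + eps) * (INR m + Q)) by nra.
  pose proof (prob_bound p m (e / 8) ((1 - eps) * (INR m + Q)) ((1 + eps) * (INR m + Q)) Hp ltac:(lra) Hb) as PB.
  assert (HT : target f n = INR m + Q) by reflexivity.
  change (succ_probs f n) with (qsof p m). rewrite HT.
  pose proof (prob_le1 (qsof p m) ((1 - eps) * (INR m + Q)) ((1 + eps) * (INR m + Q))) as P1.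
  assert (Fq : Forall okq (qsof p m)). { apply Forall_seq. intros i Hi. destruct (q_props p i Hp ltac:(lia)); auto. }
  specialize (P1 Fq).
  assert (Hbd : - (e * e / 160) * p * N <= - L).
  { assert (e * e / 160 * l <= e * e / 160 * (p * N)) by (apply Rmult_le_compat_l; [nra| lra]). lra. }
  assert (X1 := exp_le _ _ (Rle_trans _ _ _ U Hbd)).
  assert (X2 := exp_le _ _ (Rle_trans _ _ _ Lw Hbd)).
  unfold R_dist. rewrite Rabs_left1 by lra. lra.
Qed.
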